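(* Let $p$ be an odd prime and let $J$ be a finite family of lattice points in $\mathbb{Z}^2$ (repetitions allowed) with $|J|=3p-2$ or $|J|=3p-1$. If $(p,J)=0$, then $(2p,J)\equiv -1 \pmod p$.
   Context: For a finite family $X$ of lattice points in $\mathbb{Z}^2$ (points may repeat; subsets are subfamilies, i.e. subsets of the index set) and an integer $n\ge 0$, $(n,X)$ denotes the number of $n$-element subfamilies of $X$ whose coordinatewise sum is congruent to $(0,0)$ modulo $p$. *)

(* Defs.v *)
From mathcomp Require Import all_boot all_order all_algebra.
Set Implicit Arguments. Unset Strict Implicit. Unset Printing Implicit Defensive.
Import GRing.Theory Num.Theory.
Local Open Scope ring_scope.

(* A finite family of lattice points in Z^2, indexed by 'I_m (repetitions
   allowed).  [zs_count p n J] = (n, J): the number of n-element subfamilies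
   (subsets of the index set) whose coordinatewise sum is = (0,0) mod p. *)
Definition zs_count (p n m : nat) (J : 'I_m -> int * int) : nat :=
  #|[set S : {set 'I_m} | (#|S| == n)%N
      && (p%:Z %| \sum_(i in S) (J i).1)%Z
      && (p%:Z %| \sum_(i in S) (J i).2)%Z]|.

(* Main.v *)
Require Import Defs.
From mathcomp Require Import all_boot all_order all_algebra all_field.
From mathcomp Require Import zify ring.
Section Helpers.
Set Implicit Arguments. Unset Strict Implicit. Unset Printing Implicit Defensive.
Import GRing.Theory Num.Theory.
Local Open Scope ring_scope.

Lemma alt_T (m : nat) (T : {set 'I_m}) (i : 'I_m) : i \notin T ->
  \sum_(S : {set 'I_m}) (-1) ^+ #|S| * (T \subset S)%:R = 0 :> int.
Proof.
move=> iT.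
pose h (S : {set 'I_m}) := if i \in S then S :\ i else i |: S.
have hK : involutive h.
  move=> S; rewrite /h; case iS: (i \in S).
    by rewrite setD11 setD1K.
  by rewrite setU11 setU1K ?iS.
have sub S : (T \subset h S) = (T \subset S).
  rewrite /h; case: ifP => iS; first by rewrite subsetD1 iT andbT.
  apply/subsetP/subsetP => H x xT; have := H x xT; rewrite !inE //.
  by case/orP => // /eqP xi; rewrite xi (negbTE iT) in xT.
  by move=> ->; rewrite orbT.
have crd S : (-1) ^+ #|h S| = - (-1) ^+ #|S| :> int.
  rewrite /h; case: ifP => iS.
    by rewrite [in RHS](cardsD1 i S) iS exprS mulN1r opprK.
  by rewrite cardsU1 iS exprS mulN1r.
set s := \sum_(S : {set 'I_m}) _.
have : s = - s.
  rewrite {1}/s (reindex_inj (inv_inj hK)) /= -sumrN.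
  by apply: eq_bigr => S _; rewrite sub crd mulNr.
lia.
Qed.

Lemma alt_prod (m k : nat) (c : 'I_k -> 'I_m -> int) : (k < m)%N ->
  \sum_(S : {set 'I_m}) (-1) ^+ #|S| * \prod_(j < k) (\sum_(i in S) c j i) = 0.
Proof.
move=> km.
have E (S : {set 'I_m}) : \prod_(j < k) (\sum_(i in S) c j i) =
   \sum_(f : {ffun 'I_k -> 'I_m}) ([set f j | j in 'I_k] \subset S)%:R
        * \prod_(j < k) c j (f j).
  under eq_bigr => j _ do rewrite big_mkcond /=.
  rewrite bigA_distr_bigA /=; apply: eq_bigr => f _.
  case: (boolP ([set f j | j in 'I_k] \subset S)) => H.
    rewrite mul1r; apply: eq_bigr => j _.
    by rewrite (subsetP H) //; apply: imset_f.
  rewrite mul0r.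
  have [j Sj] : exists j, f j \notin S.
    apply/existsP; apply: contraR H => /existsPn H.
    by apply/subsetP => x /imsetP [j _ ->]; have := H j; rewrite negbK.
  by rewrite (bigD1 j) //= (negbTE Sj) mul0r.
under eq_bigr => S _ do rewrite E big_distrr /=.
rewrite exchange_big /=; apply: big1 => f _.
have -> : \sum_(S : {set 'I_m}) (-1) ^+ #|S| *
    (([set f j | j in 'I_k] \subset S)%:R * \prod_(j < k) c j (f j)) =
  (\sum_(S : {set 'I_m}) (-1) ^+ #|S| * ([set f j | j in 'I_k] \subset S)%:R)
    * \prod_(j < k) c j (f j).
  by rewrite big_distrl; apply: eq_bigr => S _; rewrite mulrA.
set T := [set f j | j in 'I_k].
have [i iT] : exists i, i \notin T.
  have cT : (#|T| < m)%N.
    by apply: leq_ltn_trans (leq_imset_card _ _) _; rewrite card_ord.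
  have : (0 < #|~: T|)%N.
    by have := cardsC T; rewrite card_ord; lia.
  by case/card_gt0P => i; rewrite inE => iT; exists i.
by rewrite (alt_T iT) mul0r.
Qed.

Lemma alt_mono (m a b d : nat) (u v w : 'I_m -> int) : (a + b + d < m)%N ->
  \sum_(S : {set 'I_m}) (-1) ^+ #|S| * ((\sum_(i in S) u i) ^+ a *
     (\sum_(i in S) v i) ^+ b * (\sum_(i in S) w i) ^+ d) = 0.
Proof.
move=> H.
apply: etrans (alt_prod (fun j : 'I_(a + b + d) =>
   if (j < a)%N then u else if (j < a + b)%N then v else w) H).
apply: eq_bigr => S _; congr (_ * _).
rewrite big_split_ord big_split_ord /=.
congr (_ * _ * _).
- rewrite [RHS](eq_bigr (fun _ => \sum_(i in S) u i)) => [|j _].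
    by rewrite big_const_ord iter_mulr_1.
  by rewrite /= ltn_ord.
- rewrite [RHS](eq_bigr (fun _ => \sum_(i in S) v i)) => [|j _].
    by rewrite big_const_ord iter_mulr_1.
  have jb := ltn_ord j.
  by rewrite /= ifF ?ifT //; lia.
- rewrite [RHS](eq_bigr (fun _ => \sum_(i in S) w i)) => [|j _].
    by rewrite big_const_ord iter_mulr_1.
  by rewrite /= ifF ?ifF //; lia.
Qed.

Lemma key (p n : nat) : prime p -> odd p -> (n < 3 * p)%N ->
  ((-1) ^+ n * (p %| n)%N%:R : 'F_p) = (n == 0)%N%:R - (n == p)%N%:R + (n == 2 * p)%N%:R.
Proof.
move=> pr op lt.
have p1 := prime_gt1 pr.
case: (boolP (p %| n)%N) => [/dvdnP [q nq]|nd].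
  have q3 : (q < 3)%N by rewrite -(ltn_pmul2r (prime_gt0 pr)) -nq.
  subst n; clear lt; case: q q3 => [|[|[|q]]] // _.
  - rewrite mul0n expr0 mul1r.
    have -> : (0 == p) = false by lia.
    have -> : (0 == 2 * p) = false by lia.
    by rewrite eqxx subr0 addr0.
  - rewrite mul1n -signr_odd op expr1 mulN1r.
    have -> : (p == 0) = false by lia.
    have -> : (p == 2 * p) = false by lia.
    by rewrite eqxx sub0r addr0.
  - rewrite -signr_odd oddM /= expr0 mul1r.
    have -> : (2 * p == 0) = false by lia.
    have -> : (2 * p == p) = false by lia.
    by rewrite eqxx subr0 add0r.
rewrite mulr0.
have -> : (n == 0) = false by apply/negbTE; apply: contraNneq nd => ->.
have -> : (n == p) = false by apply/negbTE; apply: contraNneq nd => ->.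
have -> : (n == 2 * p) = false.
  by apply/negbTE; apply: contraNneq nd => ->; rewrite dvdn_mull.
by rewrite subrr addr0.
Qed.

Lemma dvdF (p : nat) (z : int) : prime p ->
   ((z%:~R : 'F_p) == 0) = (p%:Z %| z)%Z.
Proof.
move=> pr; have pc := pchar_Fp pr.
case: z => n.
  by change ((n%:R == 0 :> 'F_p) = (p%:Z %| n%:Z)%Z); rewrite -(dvdn_pcharf pc) dvdzE.
by change ((- (n.+1)%:R == 0 :> 'F_p) = (p%:Z %| Negz n)%Z); rewrite oppr_eq0 -(dvdn_pcharf pc) dvdzE.
Qed.

Lemma ferm (p : nat) (x : 'F_p) : prime p -> 1 - x ^+ (p - 1) = (x == 0)%:R.
Proof.
move=> pr; have p1 := prime_gt1 pr.
case: eqP => [->|/eqP x0].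
  by rewrite expr0n (_ : (p - 1 == 0)%N = false) ?eqxx ?subr0 //; lia.
suff : x ^+ (p - 1) = 1 by move=> ->; rewrite subrr.
apply: (mulIf x0); rewrite mul1r -exprSr.
have -> : (p - 1).+1 = #|'F_p| by rewrite card_Fp //; lia.
exact: expf_card.
Qed.

Lemma mainF (p m : nat) (J : 'I_m -> int * int) :
  prime p -> odd p -> (m = 3 * p - 2 \/ m = 3 * p - 1)%N ->
  zs_count p p J = 0%N ->
  ((zs_count p (2 * p) J)%:R : 'F_p) = -1.
Proof.
move=> pr op hm z.
have p1 := prime_gt1 pr.
pose K := (p - 1)%N.
have Km : (K + K + K < m)%N by rewrite /K; lia.
pose A (S : {set 'I_m}) := \sum_(i in S) (J i).1.
pose B (S : {set 'I_m}) := \sum_(i in S) (J i).2.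
pose N (S : {set 'I_m}) := \sum_(i in S) (1 : int).
pose T a b d (S : {set 'I_m}) := (-1) ^+ #|S| * (N S ^+ a * A S ^+ b * B S ^+ d).
have T0 a b d : (a + b + d < m)%N -> \sum_(S : {set 'I_m}) T a b d S = 0.
  exact: alt_mono.
have H0 : \sum_(S : {set 'I_m}) (-1) ^+ #|S| *
    ((1 - N S ^+ K) * (1 - A S ^+ K) * (1 - B S ^+ K)) = 0 :> int.
  have e (S : {set 'I_m}) : (-1) ^+ #|S| * ((1 - N S ^+ K) * (1 - A S ^+ K) * (1 - B S ^+ K))
    = T 0 0 0 S - T K 0 0 S - T 0 K 0 S - T 0 0 K S + T K K 0 S + T K 0 K S
      + T 0 K K S - T K K K S.
    rewrite /T !expr0; ring.
  rewrite (eq_bigr _ (fun S _ => e S)).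
  rewrite !big_split /= !sumrN !T0 ?oppr0 ?addr0 //; lia.
have HF : \sum_(S : {set 'I_m}) ((-1) ^+ #|S| *
   ((((p %| #|S|)%N) && (p%:Z %| A S)%Z) && (p%:Z %| B S)%Z)%:R : 'F_p) = 0.
  have := congr1 (fun z : int => (z%:~R : 'F_p)) H0.
  rewrite /= mulr0z rmorph_sum => H1; apply: etrans H1.
  apply: eq_bigr => S _.
  rewrite rmorphM rmorphXn rmorphN1 !rmorphM !rmorphB rmorph1 !rmorphXn !ferm //.
  rewrite !dvdF //.
  have -> : N S = #|S|%:Z by rewrite /N sumr_const natz.
  by rewrite [(p%:Z %| #|S|%:Z)%Z]dvdzE /= -!natrM !mulnb.
pose E n (S : {set 'I_m}) :=
  ((#|S| == n) && (p%:Z %| A S)%Z) && (p%:Z %| B S)%Z.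
have cnt n : \sum_(S : {set 'I_m}) ((E n S)%:R : 'F_p) = (zs_count p n J)%:R.
  rewrite /zs_count -sum1_card natr_sum [RHS]big_mkcond /=.
  by apply: eq_bigr => S _; rewrite inE /E /A /B; case: ifP.
have c0 : \sum_(S : {set 'I_m}) ((E 0%N S)%:R : 'F_p) = 1.
  rewrite (bigD1 set0) //= big1 => [|S nS].
    by rewrite /E cards0 eqxx /A /B !big_set0 dvdz0 addr0.
  by rewrite /E cards_eq0 (negbTE nS).
have dec (S : {set 'I_m}) : (-1) ^+ #|S| *
   ((((p %| #|S|)%N) && (p%:Z %| A S)%Z) && (p%:Z %| B S)%Z)%:R
   = (E 0%N S)%:R - (E p S)%:R + (E (2 * p)%N S)%:R :> 'F_p.
  have cS : (#|S| < 3 * p)%N.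
    have := subset_leq_card (subsetT S); rewrite cardsT card_ord; lia.
  rewrite /E; case: (p%:Z %| A S)%Z; case: (p%:Z %| B S)%Z;
    rewrite ?andbT ?andbF /= ?mulr0 ?subrr ?addr0 //.
  exact: key.
move: HF; rewrite (eq_bigr _ (fun S _ => dec S)) !big_split /= sumrN c0 !cnt z.
move=> h; apply/eqP; rewrite -subr_eq0 opprK addrC; apply/eqP.
by rewrite -h subr0.
Qed.
End Helpers.

Theorem corollary3 (p m : nat) (J : 'I_m -> int * int) :
  prime p -> odd p -> (m = 3 * p - 2 \/ m = 3 * p - 1)%N ->
  zs_count p p J = 0%N ->
  ((zs_count p (2 * p) J)%:Z = - 1 %[mod p%:Z])%Z.
Proof.
move=> pr op hm z.
have h := mainF pr op hm z.
apply/eqP; rewrite eqz_mod_dvd -dvdF //.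
rewrite GRing.rmorphB GRing.rmorphN1 /=.
change ((zs_count p (2 * p) J)%:R - -1 == 0 :> 'F_p)%R; rewrite h.
by rewrite GRing.opprK GRing.addNr.
Qed.
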